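(* Let $C\subseteq\mathbb{R}^d$ be a closed cone and let $\bar z\in C$. Then \[\operatorname{Lsp}(C)+[\bar z]\subseteq\operatorname{Lsp}(T_C(\bar z)).\]
   Context: For a cone $C\subseteq\mathbb{R}^d$, $\operatorname{Lsp}(C)$ denotes the largest linear subspace $L\subseteq\mathbb{R}^d$ such that $C+L\subseteq C$ (this is well defined). For $z\in\mathbb{R}^d$, $[z]=\{\alpha z\mid\alpha\in\mathbb{R}\}$. $T_C(\bar z)=\{w\mid \exists t_k\downarrow 0,\ w_k\to w \text{ with } \bar z+t_kw_k\in C\ \forall k\}$ is the tangent (contingent) cone. *)

(* Defs.v *)
From HB Require Import structures.
From mathcomp Require Import all_boot all_order all_algebra.
From mathcomp Require Import all_classical all_reals all_analysis.
Set Implicit Arguments. Unset Strict Implicit. Unset Printing Implicit Defensive.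
Import Order.TTheory GRing.Theory Num.Theory.
Import numFieldNormedType.Exports.
Local Open Scope classical_set_scope.
Local Open Scope ring_scope.

Definition is_cone (R : realType) (d : nat) (C : set 'rV[R]_d) : Prop :=
  forall (t : R) (x : 'rV[R]_d), 0 < t -> C x -> C (t *: x).

Definition is_linear_subspace (R : realType) (d : nat) (L : set 'rV[R]_d) : Prop :=
  L 0 /\ (forall x y, L x -> L y -> L (x + y)) /\
  (forall (a : R) x, L x -> L (a *: x)).

(* Lsp C: the largest linear subspace L with C + L ⊆ C, realized as the set
   of vectors lying in some linear subspace L with C + L ⊆ C (this union is
   itself such a subspace, hence the largest one). *)
Definition Lsp (R : realType) (d : nat) (C : set 'rV[R]_d) : set 'rV[R]_d :=
  [set v | exists L : set 'rV[R]_d,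
     [/\ is_linear_subspace L,
         (forall c l, C c -> L l -> C (c + l)) & L v]].

Definition tangent_cone (R : realType) (d : nat) (C : set 'rV[R]_d)
    (zbar : 'rV[R]_d) : set 'rV[R]_d :=
  [set w | exists (t : nat -> R) (wk : nat -> 'rV[R]_d),
     [/\ (forall k, 0 < t k), t @ \oo --> (0 : R), wk @ \oo --> w &
         forall k, C (zbar + t k *: wk k)]].

(* Main.v *)
Require Import Defs.
From mathcomp Require Import all_boot all_order all_algebra.
From mathcomp Require Import all_classical all_reals all_analysis.
Import Order.TTheory GRing.Theory Num.Theory.
Import numFieldNormedType.Exports.
Local Open Scope classical_set_scope.
Local Open Scope ring_scope.

Lemma helperAC (V : zmodType) (z X Y Z W : V) :
  z + (X + Y + (Z + W)) = z + W + (X + Y + Z).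
Proof.
rewrite -!addrA; congr (_ + _).
by rewrite [W + _]addrC -!addrA; congr (_ + _); rewrite [W + _]addrC addrC -addrA.
Qed.

Theorem lemma2p8 (R : realType) (d : nat) (C : set 'rV[R]_d) (zbar : 'rV[R]_d) :
  closed C -> is_cone C -> C zbar ->
  forall (x : 'rV[R]_d) (a : R),
    Lsp C x -> Lsp (tangent_cone C zbar) (x + a *: zbar).
Proof.
move=> _ coneC Cz x a [L [[L0 [LD LZ]] hL Lx]].
exists [set v | exists l b, L l /\ v = l + b *: zbar]; split.
- split; first by exists 0, 0; rewrite scale0r addr0.
  split.
  + move=> _ _ [l1 [b1 [L1 ->]]] [l2 [b2 [L2 ->]]].
    exists (l1 + l2), (b1 + b2); split; first exact: LD.
    by rewrite scalerDl addrACA.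
  + move=> c _ [l [b [Ll ->]]]; exists (c *: l), (c * b); split; first exact: LZ.
    by rewrite scalerDr scalerA.
- move=> c _ [t [wk [tpos tcvg wcvg hC]]] [l [b [Ll ->]]].
  exists t, (fun k => if 0 < 1 + t k * b then (1 + t k * b) *: wk k + (l + b *: zbar) else 0).
  split => //.
  + have h1 : (fun k => 1 + t k * b) @ \oo --> (1 : R).
      rewrite -[X in _ --> X]addr0.
      apply: cvgD; first exact: cvg_cst.
      rewrite -(mul0r b); apply: cvgMl; exact: tcvg.
    have hev := cvgr_gt 1 h1 0 ltr01.
    have h2 : (fun k => (1 + t k * b) *: wk k + (l + b *: zbar)) @ \oo --> c + (l + b *: zbar).
      apply: cvgD; last exact: cvg_cst.
      rewrite -[X in _ --> X]scale1r; exact: cvgZ.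
    apply: cvg_trans; last exact: h2.
    apply: near_eq_cvg.
    move: (hev eventually_filter); apply: filterS => k /= hk; by rewrite hk.
  + move=> k; case: ifP => hk; last by rewrite scaler0 addr0.
    have -> : zbar + t k *: ((1 + t k * b) *: wk k + (l + b *: zbar))
        = (1 + t k * b) *: (zbar + t k *: wk k) + t k *: l.
      rewrite !scalerDr !scalerDl !scalerA scale1r mul1r.
      rewrite scale1r scalerDr scalerA [t k * b * t k]mulrC.
      by rewrite helperAC addrA.
    apply: hL; first exact: coneC.
    exact: LZ.
- by exists x, a.
Qed.
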